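(* Let $P$ be a finite semipure poset of length $n$ having both a unique minimum element $\hat 0$ and a unique maximum element, $t\ge1$, $\lambda_P:\mathrm{Cov}(\hat P)\to L_P$ an EL-labeling, and $\lambda$ the induced EL-labeling of $\widehat{P*T_{t,n}}$, restricted to the interval $(P*T_{t,n})^+=[(\hat 0,\hat 0_T),\hat 1]$. Then the number of ascent free maximal chains of $(P*T_{t,n})^+$ equals $$\sum_{\substack{w\in\mathrm{NDA}_n(L_P)\\ w_{n-1}\not\le w_n}} c(w)\,t^{\mathrm{asc}(w)+1}(1+t)^{n-1-2\,\mathrm{asc}(w)},$$ where $c(w)$ is the number of maximal chains of $P$ whose label sequence under $\lambda_P$ (restricted to $\mathrm{Cov}(P)$) is $w$.
   Context: Rees product $P*Q$ of semipure posets (rank $r_P(x)$ = common length of maximal chains of $P_{\le x}$): the set $\{(p,q): r_P(p)\ge r_Q(q)\}$ with $(p_1,q_1)\le(p_2,q_2)$ iff $p_1\le p_2$, $q_1\le q_2$, $r_P(p_2)-r_P(p_1)\ge r_Q(q_2)-r_Q(q_1)$. $T_{t,n}$: sequences over $\{1,\dots,t\}$ of length $\le n$ ordered by prefix, minimum $\hat 0_T$, rank = length. $\hat Q$: $Q$ with a new minimum and new maximum adjoined (even if $Q$ already has them); for $\hat P$ these are $\hat 0_P,\hat 1_P$. $Q^+$ denotes $Q$ with a new maximum adjoined; $(P*T_{t,n})^+$ is identified with the interval $[(\hat 0,\hat 0_T),\hat 1]$ of $\widehat{P*T_{t,n}}$. An edge labeling $\lambda:\mathrm{Cov}(Q)\to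 L$ of a bounded poset is an EL-labeling if each interval $[x,y]$ has a unique maximal chain with weakly increasing labels and its label sequence lexicographically precedes those of all other maximal chains of $[x,y]$. The induced labeling $\lambda$ of $\widehat{P*T_{t,n}}$ takes values in $L_P\times\{0<1\}$ (product order): the minimum is identified with $(\hat 0_P,\hat 0_T)$; for a cover $(x,k)\lessdot(y,l)$ with $(y,l)\ne\hat 1$, $\lambda=(\lambda_P(x,y),1)$ if $k<l$ and $(\lambda_P(x,y),0)$ if $k=l$; for $(x,k)\lessdot\hat 1$, $\lambda=(\lambda_P(x,\hat 1_P),0)$. A maximal chain is ascent free if no two consecutive labels $a,b$ satisfy $a\le b$. For a word $w$ of length $N$ over a poset $A$: $i\in[N-1]$ is an ascent if $w_i\le w_{i+1}$; $\mathrm{asc}(w)$ counts ascents; a double ascent is $i\in[N-2]$ with $w_i\le w_{i+1}\le w_{i+2}$; $\mathrm{NDA}_N(A)$ is the set of length-$N$ words over $A$ without double ascents. *)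

(* Defs.v *)
From HB Require Import structures.
From mathcomp Require Import all_boot all_order.
Set Implicit Arguments. Unset Strict Implicit. Unset Printing Implicit Defensive.
Import Order.TTheory.

Section Generic.
Variable T : finType.
Variable le : rel T.

Definition ltR (x y : T) : bool := le x y && (x != y).

Definition coversb (x y : T) : bool :=
  ltR x y && [forall z, ~~ (ltR x z && ltR z y)].

Definition is_maxchain (x y : T) (s : seq T) : bool :=
  if s is a :: s' then [&& a == x, path coversb a s' & last a s' == y]
  else false.

Definition labels (L : Type) (lab : T -> T -> L) (s : seq T) : seq L :=
  if s is a :: s' then pairmap lab a s' else [::].
End Generic.

Definition lexlt (L : eqType) (leL : rel L) (a b : seq L) : Prop :=
  (exists (u : seq L) (x y : L) (a' b' : seq L),
      [/\ a = u ++ x :: a', b = u ++ y :: b', leL x y & x != y])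
  \/ (exists v : seq L, v != [::] /\ b = a ++ v).

Definition EL_labeling (T : finType) (le : rel T) (L : eqType) (leL : rel L)
  (lab : T -> T -> L) : Prop :=
  forall x y : T, le x y ->
  exists s : seq T,
    [/\ is_maxchain le x y s,
        sorted leL (labels lab s),
        (forall s', is_maxchain le x y s' -> sorted leL (labels lab s') -> s' = s)
      & (forall s', is_maxchain le x y s' -> s' != s ->
           lexlt leL (labels lab s) (labels lab s'))].

Definition card_is (X : eqType) (A : pred X) (N : nat) : Prop :=
  exists l : seq X, [/\ uniq l, (forall x, (x \in l) = A x) & size l = N].

(* Hat construction: adjoin a new minimum (None) and a new maximum     *)
(* (Some None); old elements are Some (Some x).                        *)
Definition hat (X : Type) := option (option X).
Definition hbot {X : Type} : hat X := None.
Definition htop {X : Type} : hat X := Some None.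
Definition hin {X : Type} (x : X) : hat X := Some (Some x).

Definition hle (X : Type) (le : X -> X -> bool) (a b : hat X) : bool :=
  match a, b with
  | None, _ => true
  | _, None => false
  | Some None, Some None => true
  | Some None, Some (Some _) => false
  | Some (Some _), Some None => true
  | Some (Some x), Some (Some y) => le x y
  end.

Section PosetP.
Variables (d : Order.disp_t) (P : finPOrderType d).
Local Open Scope order_scope.

Definition chainb (C : {set P}) : bool :=
  [forall x in C, forall y in C, (x <= y) || (y <= x)].

Definition downset (x : P) : {set P} := [set y | y <= x].

Definition maxchain_in (S C : {set P}) : bool :=
  [&& C \subset S, chainb C &
      [forall D : {set P}, ((C \proper D) && (D \subset S)) ==> ~~ chainb D]].

Definition semipure : Prop :=
  forall (x : P) (C D : {set P}),
    maxchain_in (downset x) C -> maxchain_in (downset x) D -> #|C| = #|D|.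

(* rank: the (common, for semipure P) length of maximal chains of P_{<= x} *)
Definition rankP (x : P) : nat :=
  (\max_(C : {set P} | maxchain_in (downset x) C) #|C|).-1.

Definition poset_length : nat :=
  (\max_(C : {set P} | maxchain_in setT C) #|C|).-1.

Definition poset_le : rel P := fun x y => x <= y.
End PosetP.

(* T_{t,n}: sequences over {1..t} (here 'I_t) of length <= n, ordered  *)
(* by prefix, rank = length. Encoded as a tagged tuple.                *)
Definition Tseq (t n : nat) := {k : 'I_n.+1 & k.-tuple 'I_t}.
Definition tseq (t n : nat) (a : Tseq t n) : seq 'I_t := tval (tagged a).
Definition Tnil (t n : nat) : Tseq t n :=
  @Tagged 'I_n.+1 ord0 (fun k : 'I_n.+1 => k.-tuple 'I_t) [tuple].

Section Rees.
Variables (d : Order.disp_t) (P : finPOrderType d) (t n : nat).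
Local Open Scope order_scope.

Definition rees_mem (x : P * Tseq t n) : bool :=
  (size (tseq x.2) <= rankP x.1)%N.

Definition Rees := {x : P * Tseq t n | rees_mem x}.

(* (p1,q1) <= (p2,q2) iff p1 <= p2, q1 prefix of q2, and
   r_P(p2) - r_P(p1) >= r_T(q2) - r_T(q1)  (stated without subtraction) *)
Definition reesle (a b : Rees) : bool :=
  [&& (val a).1 <= (val b).1,
      prefix (tseq (val a).2) (tseq (val b).2) &
      (size (tseq (val b).2) + rankP (val a).1
         <= rankP (val b).1 + size (tseq (val a).2))%N].

Definition rees_bot (bot : P) : Rees :=
  @exist _ rees_mem (bot, Tnil t n) (leq0n (rankP bot)).

Definition tlt (q1 q2 : Tseq t n) : bool :=
  prefix (tseq q1) (tseq q2) && (tseq q1 != tseq q2).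

Variables (L : Type) (lamP : hat P -> hat P -> L).

(* induced labeling of hat(P * T_{t,n}), values in L_P x {0 < 1};
   the new minimum is identified with (0^_P, 0^_T). *)
Definition induced_label (a b : hat Rees) : L * bool :=
  match a, b with
  | Some (Some u), Some (Some v) =>
      (lamP (hin (val u).1) (hin (val v).1), tlt (val u).2 (val v).2)
  | Some (Some u), Some None => (lamP (hin (val u).1) htop, false)
  | None, Some (Some v) => (lamP hbot (hin (val v).1), tlt (Tnil t n) (val v).2)
  | _, _ => (lamP hbot hbot, false)
  end.
End Rees.

Definition prodle (d' : Order.disp_t) (L : porderType d') (a b : L * bool) : bool :=
  ((a.1 <= b.1)%O && (a.2 ==> b.2)).

Definition ascent_free (X : Type) (leX : rel X) (w : seq X) : bool :=
  sorted (fun a b => ~~ leX a b) w.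

Section Words.
Variables (d' : Order.disp_t) (L : porderType d').
Local Open Scope order_scope.

Definition asc (w : seq L) : nat :=
  count (fun p : L * L => p.1 <= p.2) (zip w (behead w)).

Fixpoint noDA (w : seq L) : bool :=
  match w with
  | a :: ((b :: c :: _) as w') => ~~ ((a <= b) && (b <= c)) && noDA w'
  | _ => true
  end.

Definition NDA (N : nat) (w : seq L) : bool := (size w == N) && noDA w.

(* N-1 is not an ascent of w (N = size w): w_{N-1} not <= w_N;
   vacuous when N < 2 (then N-1 is not in [N-1]). *)
Definition last_not_ascent (w : seq L) : bool :=
  match rev w with
  | z :: y :: _ => ~~ (y <= z)
  | _ => true
  end.

Fixpoint words (A : seq L) (N : nat) : seq (seq L) :=
  if N is N'.+1 then [seq a :: u | a <- A, u <- words A N'] else [:: [::]].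
End Words.

Definition cP (d : Order.disp_t) (P : finPOrderType d) (bot top : P)
  (L : eqType) (lamP : hat P -> hat P -> L) (w : seq L) : nat :=
  #|[set s : (size w).+1.-tuple P |
       is_maxchain (@poset_le d P) bot top s &&
       (labels (fun a b => lamP (hin a) (hin b)) s == w)]|.

(* the labels that occur on covers of P (a finite superset of all
   letters of label sequences of maximal chains of P) *)
Definition labels_of_P (d : Order.disp_t) (P : finPOrderType d)
  (L : Type) (lamP : hat P -> hat P -> L) : seq L :=
  [seq lamP (hin a) (hin b) | a <- enum P, b <- enum P].

(* Main.v *)
Require Import Defs.
From HB Require Import structures.
From mathcomp Require Import all_boot all_order zify.
Set Implicit Arguments. Unset Strict Implicit. Unset Printing Implicit Defensive.
Import Order.TTheory.

Section Rank.
Variables (d : Order.disp_t) (P : finPOrderType d).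
Local Open Scope order_scope.
Hypothesis semi : semipure P.

Lemma ext_maxchain (S C : {set P}) : C \subset S -> chainb C ->
  exists D : {set P}, (C \subset D) && maxchain_in S D.
Proof.
move=> CS cC.
pose p := fun D : {set P} => [&& C \subset D, D \subset S & chainb D].
have pC : p C by rewrite /p subxx CS cC.
case: (@arg_maxnP _ C p (fun D : {set P} => #|D|) pC) => D /and3P [CD DS cD] Dmax.
exists D; rewrite CD /maxchain_in DS cD /=.
apply/forallP => E; apply/implyP => /andP [DE ES]; apply/negP => cE.
have := Dmax E; rewrite /p (subset_trans CD (proper_sub DE)) ES cE => /(_ isT).
by rewrite -[X in X -> _]/(is_true (_ <= _)%N) leqNgt proper_card.
Qed.

Lemma chainU1 (x : P) C : chainb C -> {in C, forall y, (x <= y) || (y <= x)} ->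
  chainb (x |: C).
Proof.
move=> /forallP cC hx; apply/forallP => a; apply/implyP => /setU1P [->|aC];
  apply/forallP => b; apply/implyP => /setU1P [->|bC].
- by rewrite lexx.
- exact: hx.
- by rewrite orbC; apply: hx.
- by have /implyP/(_ aC)/forallP/(_ b)/implyP/(_ bC) := cC a.
Qed.

Lemma chainE (C : {set P}) x y : chainb C -> x \in C -> y \in C -> (x <= y) || (y <= x).
Proof. by move=> /forallP /(_ x) /implyP H xC yC; have /forallP/(_ y)/implyP := H xC; apply. Qed.

Lemma maxchain_mem (x : P) C : maxchain_in (downset x) C -> x \in C.
Proof.
case/and3P => CS cC /forallP /(_ (x |: C)).
apply: contraLR => xC; rewrite negb_imply negbK; apply/andP; split; last first.
  apply: chainU1 => // y yC; move/subsetP: CS => /(_ y yC); rewrite inE => ->.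
  by rewrite orbT.
by rewrite properUr ?sub1set // subUset sub1set CS andbT inE lexx.
Qed.

Lemma chain0 : chainb (set0 : {set P}).
Proof. by apply/forallP => a; rewrite inE. Qed.

Lemma exists_mc (S : {set P}) : exists D, maxchain_in S D.
Proof.
have [D /andP [_ H]] := @ext_maxchain S set0 (sub0set _) chain0; by exists D.
Qed.

Lemma rkE (x : P) C : maxchain_in (downset x) C -> #|C| = (rankP x).+1.
Proof.
move=> mC; rewrite /rankP.
have -> : (\max_(D | maxchain_in (downset x) D) #|D|)%N = #|C|.
  apply/eqP; rewrite eqn_leq; apply/andP; split.
    by apply/bigmax_leqP => D mD; rewrite (semi mD mC).
  by apply: (@leq_bigmax_cond _ (fun D : {set P} => maxchain_in (downset x) D) (fun D : {set P} => #|D|)).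

by rewrite prednK // card_gt0; apply/set0Pn; exists x; apply: maxchain_mem.
Qed.

Lemma rk_lt (x y : P) : x < y -> (rankP x < rankP y)%N.
Proof.
move=> xy; have [C mC] := exists_mc (downset x).
have /and3P [CS cC _] := mC.
have yC : y \notin C.
  apply/negP => /(subsetP CS); rewrite inE => yx.
  by move: (lt_le_trans xy yx); rewrite ltxx.
have c1 : chainb (y |: C).
  apply: chainU1 => // z /(subsetP CS); rewrite inE => zx.
  by rewrite (le_trans zx (ltW xy)) orbT.
have s1 : y |: C \subset downset y.
  apply/subsetP => z /setU1P [->|/(subsetP CS)]; rewrite !inE ?lexx // => zx.
  exact: le_trans zx (ltW xy).
have [D /andP [sD mD]] := ext_maxchain s1 c1.
have := subset_leq_card sD; rewrite cardsU1 yC (rkE mC) (rkE mD).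
by rewrite add1n ltnS.
Qed.

Lemma rk_cov (x y : P) : coversb (@poset_le d P) x y -> rankP y = (rankP x).+1.
Proof.
case/andP => /andP [xy xny] /forallP nb; rewrite /poset_le /= in xy.
have lxy : x < y by rewrite lt_def eq_sym xny xy.
apply/eqP; rewrite eqn_leq (rk_lt lxy) andbT.
have [C mC] := exists_mc (downset x).
have /and3P [CS cC mxC] := mC.
have xC := maxchain_mem mC.
have c1 : chainb (y |: C).
  apply: chainU1 => // z /(subsetP CS); rewrite inE => zx.
  by rewrite (le_trans zx xy) orbT.
have s1 : y |: C \subset downset y.
  apply/subsetP => z /setU1P [->|/(subsetP CS)]; rewrite !inE ?lexx // => zx.
  exact: le_trans zx xy.
have [D /andP [sD mD]] := ext_maxchain s1 c1.
have /and3P [DS cD _] := mD.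
have sD' : D \subset y |: C.
  apply/subsetP => z zD; have := subsetP DS z zD; rewrite inE => zy.
  have xD : x \in D by apply: (subsetP sD); rewrite setU1r.
  case/orP: (chainE cD xD zD) => [xz | zx].
    have := nb z; case: (eqVneq z x) => [-> _|znx]; first by rewrite setU1r.
    case: (eqVneq z y) => [-> _|zny]; first by rewrite setU11.
    by rewrite /ltR /poset_le /= xz zy eq_sym znx zny.
  case: (boolP (z \in C)) => [zC|zC]; first by rewrite setU1r.
  move/forallP: mxC => /(_ (z |: C)) /implyP; rewrite properUr ?sub1set //.
  rewrite subUset sub1set CS andbT inE zx => /(_ isT) /negP; case.
  apply: chainU1 => // u uC; apply: chainE cD zD _.
  by apply: (subsetP sD); rewrite setU1r.
have := subset_leq_card sD'; rewrite cardsU1 (rkE mC) (rkE mD).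
move=> h; exact: leq_trans h (leq_add (leq_b1 _) (leqnn _)).
Qed.

Lemma rk_le (x y : P) : x <= y -> (rankP x <= rankP y)%N.
Proof.
rewrite le_eqVlt => /orP [/eqP ->//|/rk_lt]; exact: ltnW.
Qed.

Lemma rk_eq (x y : P) : x <= y -> rankP x = rankP y -> x = y.
Proof.
rewrite le_eqVlt => /orP [/eqP ->//|/rk_lt h e]; by rewrite e ltnn in h.
Qed.

End Rank.


Definition os (X : Type) (a : option X) : seq X := if a is Some x then [:: x] else [::].

Lemma prefix_eq (T : eqType) (a b : seq T) : prefix a b -> (size b <= size a)%N -> a = b.
Proof.
rewrite prefixE => /eqP h hs; rewrite -h take_oversize //.
Qed.

Section PFacts.
Variables (d : Order.disp_t) (P : finPOrderType d) (n : nat) (bot top : P).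
Local Open Scope order_scope.
Hypotheses (hb : forall x : P, bot <= x) (ht : forall x : P, x <= top)
  (semi : semipure P) (hlen : poset_length P = n).

Lemma rk_top : rankP top = n.
Proof.
rewrite -hlen /poset_length /rankP.
have -> : downset top = setT by apply/setP => x; rewrite !inE ht.
by [].
Qed.

Lemma rk_le_n (x : P) : (rankP x <= n)%N.
Proof. by rewrite -rk_top; apply: rk_le. Qed.

Lemma rk_bot : rankP bot = 0%N.
Proof.
have [C mC] := exists_mc (downset bot).
have := rkE semi mC; have /and3P [CS _ _] := mC.
have : C \subset [set bot].
  apply/subsetP => z /(subsetP CS); rewrite !inE => zb.
  by apply/eqP; apply: le_anti; rewrite zb hb.
move/subset_leq_card; rewrite cards1 => h e; rewrite e in h; by move: h; case: (rankP bot).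
Qed.

Lemma path_rk (a : P) s : path (coversb (@poset_le d P)) a s ->
  rankP (last a s) = (rankP a + size s)%N.
Proof.
elim: s a => [|b s IH] a /=; first by rewrite addn0.
case/andP => cab ps; by rewrite IH // (rk_cov semi cab) addSn addnS.
Qed.

Lemma maxchain_size c : is_maxchain (@poset_le d P) bot top c -> size c = n.+1.
Proof.
case: c => [|a s] //= /and3P [/eqP -> ps /eqP ls].
by have := path_rk ps; rewrite ls rk_top rk_bot add0n => ->.
Qed.

End PFacts.


Lemma tseq_inj (t n : nat) : injective (@tseq t n).
Proof.
case=> k a [k' b]; rewrite /tseq /= => e.
have ek : k = k' by apply: val_inj; rewrite /= -(size_tuple a) -(size_tuple b) e.
subst k'; congr Tagged; exact: val_inj.
Qed.

Lemma mkT (t n : nat) (q : seq 'I_t) : (size q <= n)%N -> exists a : Tseq t n, tseq a = q.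
Proof.
move=> h.
exists (@Tagged 'I_n.+1 (Ordinal (h : size q < n.+1)%N) (fun k : 'I_n.+1 => k.-tuple 'I_t) (in_tuple q)).
by [].
Qed.

Section ReesC.
Variables (d : Order.disp_t) (P : finPOrderType d) (n t : nat) (bot top : P).
Local Open Scope order_scope.
Hypotheses (hb : forall x : P, bot <= x) (ht : forall x : P, x <= top)
  (semi : semipure P) (hlen : poset_length P = n).

Notation R := (Rees P t n).
Definition xu (u : R) : P := (val u).1.
Definition qu (u : R) : seq 'I_t := tseq (val u).2.
Notation RL := (hle (@reesle d P t n)).
Notation PL := (@poset_le d P).

Lemma qu_mem (u : R) : (size (qu u) <= rankP (xu u))%N.
Proof. exact: (valP u). Qed.

Lemma rees_eq (u v : R) : xu u = xu v -> qu u = qu v -> u = v.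
Proof.
move=> e1 /tseq_inj e2; apply: val_inj.
by move: e1 e2; rewrite /xu; case: (val u) => ??; case: (val v) => ?? /= -> ->.
Qed.

Lemma mk_rees (x : P) q : (size q <= rankP x)%N -> exists u : R, xu u = x /\ qu u = q.
Proof.
move=> h; have [a ea] := mkT (t := t) (leq_trans h (rk_le_n ht semi hlen x)).
have hm : rees_mem (x, a) by rewrite /rees_mem /= ea.
by exists (exist _ (x, a) hm).
Qed.

Definition mkR (x : P) (q : seq 'I_t) : hat R :=
  if [pick u : R | (xu u == x) && (qu u == q)] is Some u then hin u else hbot.

Lemma mkR_val (u : R) : mkR (xu u) (qu u) = hin u.
Proof.
rewrite /mkR; case: pickP => [w /andP [/eqP e1 /eqP e2]|/(_ u)].
  by rewrite (rees_eq e1 e2).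
by rewrite !eqxx.
Qed.

Lemma mkR_ex (x : P) q : (size q <= rankP x)%N ->
  exists u : R, [/\ mkR x q = hin u, xu u = x & qu u = q].
Proof.
move=> /mk_rees [u [e1 e2]]; exists u; split => //.
by rewrite -e1 -e2 mkR_val.
Qed.

Lemma reesleE (u v : R) : reesle u v =
  [&& xu u <= xu v, prefix (qu u) (qu v) &
      (size (qu v) + rankP (xu u) <= rankP (xu v) + size (qu u))%N].
Proof. by []. Qed.

Lemma hinE (u v : R) : (hin u == hin v :> hat R) = (u == v).
Proof. by apply/eqP/eqP => [[]|->]. Qed.


Lemma cov_hin_fwd (u v : R) : coversb RL (hin u) (hin v) ->
  coversb PL (xu u) (xu v) /\ exists a, qu v = qu u ++ os a.
Proof.
move=> /andP [/andP [luv nuv] /forallP nb].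
rewrite /= reesleE in luv; move/and3P: luv => [lx pq sz]; rewrite hinE in nuv.
have sp := size_prefix pq.
have qsu := qu_mem u; have qsv := qu_mem v.
have xne : xu u != xu v.
  apply/eqP => e; rewrite e in sz.
  have e2 := prefix_eq pq; move: (nuv); rewrite (rees_eq e) ?eqxx //.
  apply: e2; move: sz; set A := size _; set B := size _; set r := rankP _; lia.
have lt : xu u < xu v by rewrite lt_def eq_sym xne lx.
have cov : coversb PL (xu u) (xu v).
  rewrite /coversb /ltR /poset_le /= lx xne /=; apply/forallP => z.
  apply/negP => /andP [/andP [xz nxz] /andP [zy nzy]].
  have r1 : (rankP (xu u) < rankP z)%N by apply: (rk_lt semi); rewrite lt_def eq_sym nxz xz.
  have r2 : (rankP z < rankP (xu v))%N by apply: (rk_lt semi); rewrite lt_def eq_sym nzy zy.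
  set k := minn (size (qu v)) (size (qu u) + (rankP z - rankP (xu u))).
  have hk : (size (take k (qu v)) <= rankP z)%N.
    rewrite size_take_min; move: qsu r1 r2; rewrite /k.
    set A := size _; set B := size _; set r := rankP _; set r' := rankP _; set r'' := rankP _; lia.
  have [w [wx wq]] := mk_rees hk.
  move: (nb (hin w)); rewrite /ltR /= !reesleE !hinE wx wq xz zy /=.
  have -> : (u != w) by apply/eqP => e; move: nxz; rewrite -wx e eqxx.
  have -> : (w != v) by apply/eqP => e; move: nzy; rewrite -wx e eqxx.
  rewrite prefix_take !andbT size_take_min.
  have -> : prefix (qu u) (take k (qu v)).
    move: pq; rewrite !prefixE take_takel //; rewrite /k.
    move: sp; set A := size _; set B := size _; lia.
  move: sz r1 r2 qsu sp; rewrite /k.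
  set A := size _; set B := size _; set r := rankP _; set r' := rankP _; set r'' := rankP _.
  move=> *; apply/negP; lia.
split => //.
have rc := rk_cov semi cov.
move: pq => /prefixP [r er]; rewrite er.
have : (size r <= 1)%N.
  move: sz; rewrite er size_cat rc; set A := size _; set B := size r; set C := rankP _; lia.
case: r {er} => [|a [|b r]] //= _; first by exists None.
by exists (Some a).
Qed.

Lemma cov_hin_bwd (u v : R) a : coversb PL (xu u) (xu v) -> qu v = qu u ++ os a ->
  coversb RL (hin u) (hin v).
Proof.
move=> cov eq; have rc := rk_cov semi cov.
move: (cov) => /andP [/andP [lx xne] /forallP nb]; rewrite /poset_le /= in lx.
have unv : u != v by apply: contraNneq xne => ->.
have sa : (size (os a) <= 1)%N by case: a {eq}.
rewrite /coversb /ltR /= reesleE hinE unv lx eq prefix_prefix andbT /=.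
apply/andP; split.
  rewrite size_cat rc; move: sa; set A := size _; set B := size _; set r := rankP _; lia.
apply/forallP => [[[w|]|]] //=; rewrite !reesleE !hinE.
apply/negP => /andP [/andP [/and3P [l1 p1 s1] n1] /andP [/and3P [l2 p2 s2] n2]].
have := nb (xu w); rewrite /ltR /poset_le /= l1 l2 /=.
case: (eqVneq (xu u) (xu w)) => [e|]; last first.
  case: (eqVneq (xu w) (xu v)) => // e _ _.
  have sp := size_prefix p2.
  move: n2; rewrite (rees_eq e (prefix_eq p2 _)) ?eqxx //.
  move: s2 sp; rewrite e; set A := size _; set B := size _; set r := rankP _; lia.
move=> _.
have sp := size_prefix p1.
move: n1; rewrite (rees_eq e (prefix_eq p1 _)) ?eqxx //.
move: s1 sp; rewrite e; set A := size _; set B := size _; set r := rankP _; lia.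
Qed.

Lemma cov_top_fwd (u : R) : coversb RL (hin u) htop -> xu u = top.
Proof.
move=> /andP [_ /forallP nb]; apply/eqP; apply: contraT => nt.
have hs : (size (qu u) <= rankP top)%N := leq_trans (qu_mem u) (rk_le semi (ht _)).
have [w [wx wq]] := mk_rees hs.
move: (nb (hin w)); rewrite /ltR /= reesleE hinE wx wq ht prefix_refl andbT /=.
have -> : u != w by apply: contraNneq nt => ->; rewrite wx.
by rewrite addnC leq_add2r (rk_le semi (ht _)).
Qed.

Lemma cov_top_bwd (u : R) : xu u = top -> coversb RL (hin u) htop.
Proof.
move=> e; rewrite /coversb /ltR /=; apply/forallP => [[[w|]|]] //=.
rewrite reesleE hinE andbT; apply/negP => /andP [/and3P [l1 p1 s1] n1].
have ew : xu w = top by apply: le_anti; rewrite ht -e.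
have sp := size_prefix p1.
move: n1; rewrite (rees_eq (etrans e (esym ew)) (prefix_eq p1 _)) ?eqxx //.
move: s1 sp; rewrite e ew; set A := size _; set B := size _; set r := rankP _; lia.
Qed.

Lemma cov_not_bot (a : hat R) : coversb RL a hbot = false.
Proof. by case: a => [[?|]|]; rewrite /coversb /ltR /= ?eqxx ?andbF. Qed.

Lemma cov_not_top (b : hat R) : coversb RL htop b = false.
Proof. by case: b => [[?|]|] //; rewrite /coversb /ltR /= eqxx. Qed.

Fixpoint Fr (x0 : P) (q : seq 'I_t) (c : seq P) (e : seq (option 'I_t)) : seq (hat R) :=
  mkR x0 q :: match c, e with
   | x1 :: c', a :: e' => Fr x1 (q ++ os a) c' e'
   | _, _ => [:: htop] end.

Variables (d' : Order.disp_t) (L : porderType d') (lamP : hat P -> hat P -> L).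

Fixpoint LL (x0 : P) (c : seq P) (e : seq (option 'I_t)) : seq (L * bool) :=
  match c, e with
   | x1 :: c', a :: e' => (lamP (hin x0) (hin x1), isSome a) :: LL x1 c' e'
   | _, _ => [:: (lamP (hin x0) htop, false)] end.

Definition pxd (h : hat R) : P := if h is Some (Some w) then xu w else bot.
Definition pq (h : hat R) : seq 'I_t := if h is Some (Some w) then qu w else [::].
Definition dq (h h' : hat R) : option 'I_t := ohead (drop (size (pq h)) (pq h')).

Lemma IL_hin (u v : R) a : qu v = qu u ++ os a ->
  induced_label lamP (hin u) (hin v) = (lamP (hin (xu u)) (hin (xu v)), isSome a).
Proof.
move=> e; rewrite /induced_label /tlt; congr pair.
rewrite -/(qu u) -/(qu v) e prefix_prefix /=.
by case: a {e} => [x|] /=; rewrite ?cats0 ?eqxx //; apply/eqP => /(f_equal size);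
  rewrite size_cat /= addn1 => h; have := ltnSn (size (qu u)); rewrite -{2}h ltnn.
Qed.

Lemma Fr_sound c : forall e (u : R), path (coversb PL) (xu u) c -> last (xu u) c = top ->
  size e = size c ->
  let s := Fr (xu u) (qu u) c e in
  [/\ s = hin u :: behead s,
      path (coversb RL) (hin u) (behead s) /\ last (hin u) (behead s) = htop,
      map pxd s = rcons (xu u :: c) bot, pairmap dq (hin u) (behead s) = rcons e None
    & pairmap (induced_label lamP) (hin u) (behead s) = LL (xu u) c e].
Proof.
elim: c => [|x1 c IH] [|a e] u //= pc lc se.
  rewrite mkR_val /= cov_top_bwd //; split => //.
case/andP: pc => cx pc.
have hs : (size (qu u ++ os a) <= rankP x1)%N.
  rewrite size_cat (rk_cov semi cx); have := qu_mem u; case: a {se} => [?|] /=;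
  rewrite ?addn0 ?addn1 ?ltnS // => h; exact: leqW.
have [w [ew wx wq]] := mkR_ex hs.
move: (IH e w); rewrite wx wq => /(_ pc lc (eq_add_S _ _ se)) [e1 [p1 l1] m1 d1 i1].
move: e1 p1 l1 m1 d1 i1; set F := Fr _ _ _ _; set s' := behead F.
clearbody s'; clearbody F => e1 p1 l1 m1 d1 i1.
rewrite mkR_val e1; split => //.
- by rewrite /= (cov_hin_bwd (a := a)) ?wx ?wq.
- by rewrite -e1 /= m1.
- rewrite /= d1 /dq /= wq drop_size_cat //.
  by case: (a).

- rewrite -[pairmap _ _ (_ :: _)]/(induced_label lamP (hin u) (hin w) :: pairmap (induced_label lamP) (hin w) s').
  by rewrite i1 (IL_hin wq) wx.
Qed.

Lemma Fr_complete s : forall (u : R), path (coversb RL) (hin u) s -> last (hin u) s = htop ->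
  exists c e, [/\ path (coversb PL) (xu u) c, last (xu u) c = top, size e = size c &
    hin u :: s = Fr (xu u) (qu u) c e].
Proof.
elim: s => [|v s IH] u /=; first by move=> _ [].
case/andP => cv ps ls.
case: v cv ps ls => [[w|]|] cv ps ls; last by rewrite cov_not_bot in cv.
- have [cx [a eq]] := cov_hin_fwd cv.
  have [c [e [pc lc se ee]]] := IH w ps ls.
  exists (xu w :: c), (a :: e); split => //=.
  + by rewrite cx.
  + by rewrite se.
  + by rewrite mkR_val -eq ee.
- clear IH; case: s ps ls => [|b s] /=; last by rewrite cov_not_top.
  move=> _ _; exists [::], [::]; split => //=; first exact: cov_top_fwd.
  by rewrite mkR_val.
Qed.
End ReesC.


Fixpoint wrd (X : Type) (A : seq X) (m : nat) : seq (seq X) :=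
  if m is m'.+1 then [seq a :: u | a <- A, u <- wrd A m'] else [:: [::]].

Lemma count_wrd (X : Type) (A : seq X) m (p : pred (seq X)) :
  count p (wrd A m.+1) = \sum_(a <- A) count (fun u => p (a :: u)) (wrd A m).
Proof.
rewrite /=; move: (wrd A m) => U.
elim: A => [|a A IH]; first by rewrite big_nil.
by rewrite big_cons -IH /= count_cat count_map.
Qed.

Definition Ao (t : nat) : seq (option 'I_t) := None :: map Some (enum 'I_t).

Lemma count_Ao t m (p : pred (seq bool)) :
  count (fun e => p (map isSome e)) (wrd (Ao t) m.+1) =
  count (fun e => p (false :: map isSome e)) (wrd (Ao t) m) +
  t * count (fun e => p (true :: map isSome e)) (wrd (Ao t) m).
Proof.
rewrite count_wrd /Ao big_cons big_map /=; congr (_ + _).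
rewrite (eq_bigr (fun _ => count (fun e => p (true :: map isSome e)) (wrd (Ao t) m))) //.
by rewrite big_const_seq count_predT size_enum_ord iter_addn_0 mulnC.
Qed.

Section Core.
Variables (d' : Order.disp_t) (L : porderType d') (t : nat) (z : L).
Local Open Scope order_scope.

Definition Rp (a b : L * bool) : bool := ~~ prodle a b.
Definition Qb (w : seq L) (bs : seq bool) : bool := sorted Rp (rcons (zip w bs) (z, false)).

Definition Fm (w : seq L) : nat :=
  if noDA w && last_not_ascent w then (t ^ (asc w).+1 * (1 + t) ^ (size w - 1 - 2 * asc w))%N
  else 0%N.

Definition G (c : L) (w : seq L) : nat :=
  if w is d :: w3 then (if c <= d then 0%N else Fm (d :: w3)) else 0%N.
Definition H (c : L) (w : seq L) : nat :=
  if w is d :: w3 then (if c <= d then G d w3 else Fm (d :: w3)) else 1%N.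

Lemma LNA_cons (x : L) w : (1 < size w)%N -> last_not_ascent (x :: w) = last_not_ascent w.
Proof.
rewrite /last_not_ascent rev_cons -size_rev; case: (rev w) => [|a [|b r]] //.
Qed.

Lemma LNA2 (x y : L) : last_not_ascent [:: x; y] = ~~ (x <= y).
Proof. by []. Qed.

Lemma noDA_cons (x y : L) w : ~~ (x <= y) -> noDA [:: x, y & w] = noDA (y :: w).
Proof. by case: w => [|c w] //= /negbTE ->. Qed.

Lemma noDA3 (x y u : L) w : noDA [:: x, y, u & w] = ~~ ((x <= y) && (y <= u)) && noDA [:: y, u & w].
Proof. by []. Qed.

Lemma asc_cons (x y : L) w : asc [:: x, y & w] = ((x <= y)%O + asc (y :: w))%N.
Proof. by []. Qed.

Lemma asc_bound N : forall w : seq L, (size w <= N)%N ->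
  noDA w -> last_not_ascent w -> (2 * asc w <= (size w).-1)%N.
Proof.
elim: N => [|N IH] [|a [|c w]] // sw.
have sw' : (size w < N)%N by [].
case: (boolP (a <= c)) => ac.
- case: w sw sw' => [|e w] sw sw'; first by rewrite LNA2 ac.
  rewrite noDA3 ac andTb => /andP [ce nd] ln.
  rewrite asc_cons ac asc_cons (negbTE ce).
  rewrite (noDA_cons _ ce) in nd.
  have ln' : last_not_ascent (e :: w).
    case: w {sw sw' nd} ln => [|f w] ln //.
    by rewrite LNA_cons // LNA_cons // in ln.
  have := IH (e :: w) (ltnW sw') nd ln' => /=.
  case: N IH sw sw' => [|N] IH sw sw' //=; lia.
- move=> nd ln; rewrite asc_cons (negbTE ac) add0n.
  have nd' : noDA (c :: w).
    by case: w {sw sw' ln} nd => [|e w] //; rewrite noDA3 (negbTE ac) /=.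
  have ln' : last_not_ascent (c :: w).
    by case: w {sw sw' nd nd'} ln => [|f w] ln //; rewrite LNA_cons // in ln.
  have := IH (c :: w) sw' nd' ln' => /=; lia.
Qed.

Lemma Fm_nasc (a c : L) w : ~~ (a <= c) -> Fm [:: a, c & w] = ((1 + t) * Fm (c :: w))%N.
Proof.
rewrite /Fm => ac.
have -> : noDA [:: a, c & w] = noDA (c :: w) by rewrite noDA_cons.
have -> : last_not_ascent [:: a, c & w] = last_not_ascent (c :: w).
  case: w => [|e w]; first by rewrite LNA2 ac.
  by rewrite LNA_cons.
case: ifP => [/andP [nd ln]|]; last by rewrite muln0.
have hb := asc_bound (leqnn _) nd ln.
rewrite asc_cons (negbTE ac) add0n.
move: hb; set k := asc (c :: w) => hb.
rewrite mulnCA -expnS; congr (_ * _)%N; congr (_ ^ _)%N.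
move: hb; rewrite /=; lia.
Qed.

Lemma Fm_asc (a c : L) w : a <= c -> Fm [:: a, c & w] = (t * G c w)%N.
Proof.
move=> ac; case: w => [|e w]; first by rewrite /Fm LNA2 ac andbF muln0.
rewrite /G; case: (boolP (c <= e)) => ce; first by rewrite /Fm noDA3 ac ce muln0.
rewrite /Fm noDA3 ac andTb ce andTb (noDA_cons _ ce).
have -> : last_not_ascent [:: a, c, e & w] = last_not_ascent (e :: w).
  rewrite LNA_cons //; case: w => [|f w]; first by rewrite LNA2 ce.
  by rewrite LNA_cons.
case: ifP => _; last by rewrite muln0.
rewrite asc_cons ac asc_cons (negbTE ce) add0n mulnA -expnS.
congr (_ ^ _ * _ ^ _)%N; rewrite /=; lia.
Qed.

Definition Nb (a : L) (w : seq L) (b : bool) : nat :=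
  count (fun e => Qb (a :: w) (b :: map isSome e)) (wrd (Ao t) (size w)).

Lemma Nb_nil (a : L) (b : bool) : a <= z -> Nb a [::] b = b.
Proof. by move=> az; rewrite /Nb /= /Qb /= /Rp /prodle /= az; case: b. Qed.

Lemma count_andl (X : Type) (b : bool) (p : pred X) s :
  count (fun x => b && p x) s = (b * count p s)%N.
Proof. by case: b => /=; rewrite ?mul1n ?mul0n ?count_pred0 //; elim: s. Qed.

Lemma Nb_cons (a c : L) w b : Nb a (c :: w) b =
  (Rp (a, b) (c, false) * Nb c w false + t * (Rp (a, b) (c, true) * Nb c w true))%N.
Proof.
rewrite /Nb /= (count_Ao t (size w) (fun bs => Qb [:: a, c & w] (b :: bs))).
by rewrite /Qb /= -!count_andl.
Qed.

Lemma core (a : L) w : last a w <= z ->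
  [/\ Nb a w false = G a w, Nb a w true = H a w &
      (Nb a w false + t * Nb a w true = Fm (a :: w))%N].
Proof.
elim: w a => [|c w IH] a /= lz.
  by rewrite !Nb_nil // /Fm /= muln1 addn0 muln1.
have [Nf Nt Tot] := IH c lz.
rewrite !Nb_cons Nf Nt /Rp /prodle /=.
case: (boolP (a <= c)) => ac /=.
- by rewrite (Fm_asc _ ac) !mul0n !muln0 !mul1n !addn0.
- rewrite Nf Nt in Tot; rewrite (Fm_nasc _ ac) !mul1n Tot.
  by split => //; rewrite mulnDl mul1n.
Qed.

Lemma count_Qb (a : L) w : last a w <= z ->
  count (fun e => Qb (a :: w) (map isSome e)) (wrd (Ao t) (size w).+1) = Fm (a :: w).
Proof.
move=> lz; have [_ _ <-] := core lz.
by rewrite (count_Ao t (size w) (Qb (a :: w))).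
Qed.

End Core.


Lemma count_allpairs' (S T R : Type) (f : S -> T -> R) (s : seq S) (u : seq T) (p : pred R) :
  count p [seq f x y | x <- s, y <- u] = \sum_(x <- s) count (fun y => p (f x y)) u.
Proof.
elim: s => [|a s IH]; first by rewrite big_nil.
by rewrite big_cons -IH /= count_cat count_map.
Qed.

Lemma mem_wrd (X : eqType) (A : seq X) m u : (u \in wrd A m) = (size u == m) && all (mem A) u.
Proof.
elim: m u => [|m IH] [|a u]; rewrite /= ?inE //.
- by apply/negP => /allpairsP [[b v] [_ _ /= e]].
- apply/allpairsP/idP => [[[b v] /= [bA vw [-> ->]]]|/andP [su /andP [aA uA]]].
    by move: vw; rewrite IH => /andP [/eqP -> ->]; rewrite eqxx bA.
  by exists (a, u); split => //; rewrite /= IH -eqSS su.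
Qed.

Lemma wrd_uniq (X : eqType) (A : seq X) m : uniq A -> uniq (wrd A m).
Proof.
move=> uA; elim: m => [|m IH] //=.
apply: allpairs_uniq => // [[a u] [b v]] _ _ /= [-> ->] //.
Qed.

Lemma cov_hat_top (X : finType) (le : rel X) (b : hat X) : coversb (hle le) htop b = false.
Proof. by case: b => [[?|]|] //; rewrite /coversb /ltR /= eqxx. Qed.

Lemma cov_hat_bot (X : finType) (le : rel X) (x : X) : coversb (hle le) (hin x) hbot = false.
Proof. by []. Qed.

Section Main.
Variables (d : Order.disp_t) (P : finPOrderType d) (n t : nat) (bot top : P)
  (d' : Order.disp_t) (L : porderType d') (lamP : hat P -> hat P -> L).
Local Open Scope order_scope.
Hypotheses (hb : forall x : P, bot <= x) (ht : forall x : P, x <= top)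
  (semi : semipure P) (hlen : poset_length P = n)
  (EL : EL_labeling (hle (@poset_le d P)) (fun a b : L => (a <= b)%O) lamP).

Notation PL := (@poset_le d P).
Definition zl : L := lamP (hin top) htop.
Definition lab (a b : P) : L := lamP (hin a) (hin b).

Lemma EL_last (x : P) : coversb PL x top -> lab x top <= zl.
Proof.
move=> cx; have /andP [/andP [xt xnt] _] := cx.
have [s [ms so _ _]] := @EL (hin x) htop isT.
case: s ms so => [|a s] //= /and3P [/eqP -> ps /eqP ls] so.
case: s ps ls so => [|b s] ps ls so; first by [].
case/andP: ps => cb ps.
case: b cb ps ls so => [[y|]|] cb ps ls so; last by rewrite cov_hat_bot in cb.
- have /andP [/andP [xy xny] _] := cb.
  have ey : y = top.
    apply: (rk_eq semi (ht y)); apply/eqP; rewrite eqn_leq (rk_le semi (ht y)).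
    rewrite (rk_cov semi cx); apply: (rk_lt semi).
    by rewrite lt_def eq_sym; apply/andP; split.
  subst y.
  case: s ps ls so => [|c s] ps ls so; first by [].
  case/andP: ps => cc ps.
  case: c cc ps ls so => [[y|]|] cc ps ls so; last by rewrite cov_hat_bot in cc.
  + have /andP [/andP [ty tny] _] := cc.
    have e : y = top by apply: le_anti; rewrite ht; exact: ty.
    by move: tny; rewrite e eqxx.
  + case: s ps ls so => [|e s] ps ls so; last by rewrite /= cov_hat_top in ps.
    by move: so; rewrite /= andbT.
- have /andP [_ /forallP /(_ (hin top))] := cb.
  rewrite /ltR /= xt andbT /= => /negP; case.
  by apply/eqP => -[e]; rewrite e eqxx in xnt.
Qed.


Lemma LL_eq x0 c (e : seq (option 'I_t)) : size e = size c ->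
  LL lamP x0 c e = rcons (zip (pairmap lab x0 c) (map isSome e)) (lamP (hin (last x0 c)) htop, false).
Proof.
elim: c x0 e => [|x1 c IH] x0 [|a e] //= [se].
by rewrite IH.
Qed.

Lemma lastlab x0 x1 c : path (coversb PL) x0 (x1 :: c) -> last x1 c = top ->
  last (lab x0 x1) (pairmap lab x1 c) <= zl.
Proof.
elim: c x0 x1 => [|x2 c IH] x0 x1 /=.
  by rewrite andbT => cx e1; subst x1; apply: EL_last.
by case/andP => _ pc lc; apply: IH.
Qed.

Definition Cs := [seq c <- wrd (enum P) n.+1 | is_maxchain PL bot top c].
Definition Es := wrd (Ao t) n.
Definition rb := rees_bot t n bot.
Definition FF (c : seq P) (e : seq (option 'I_t)) := Fr n bot [::] (behead c) e.
Definition AF (s : seq (hat (Rees P t n))) := ascent_free (@prodle d' L) (labels (induced_label lamP) s).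

Lemma Cs_inv c : c \in Cs -> exists c', [/\ c = bot :: c', path (coversb PL) bot c',
  last bot c' = top & size c' = n].
Proof.
rewrite mem_filter mem_wrd => /andP [+ /andP [/eqP sc _]].
case: c sc => [|a c'] //= [sc] /and3P [/eqP -> pc /eqP lc].
by exists c'.
Qed.

Lemma Es_inv e : e \in Es -> size e = n.
Proof. by rewrite mem_wrd => /andP [/eqP]. Qed.

Lemma AF_FF c e : c \in Cs -> e \in Es ->
  AF (FF c e) = Qb zl (labels lab c) (map isSome e).
Proof.
move=> /Cs_inv [c' [-> pc lc sc]] /Es_inv se.
have := Fr_sound bot ht semi hlen lamP (u := rb) pc lc (etrans se (esym sc)).
rewrite /= => [[e1 _ _ _ i1]].
rewrite /AF /FF /= e1 /= i1 LL_eq ?se ?sc // lc.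
by [].
Qed.


Hypothesis n1 : (1 <= n)%N.

Lemma count_c c : c \in Cs -> count (fun e => AF (FF c e)) Es = Fm t (labels lab c).
Proof.
move=> cC; rewrite (eq_in_count (a2 := fun e => Qb zl (labels lab c) (map isSome e))); last first.
  by move=> e eE; rewrite AF_FF.
have [c' [ec pc lc sc]] := Cs_inv cC.
case: c' ec pc lc sc => [|x1 c''] ec pc lc sc; first by move: n1; rewrite -sc.
rewrite ec /= /Es -sc /= -(size_pairmap lab x1 c'').
apply: count_Qb; exact: lastlab.
Qed.

Lemma FF_sound c e : c \in Cs -> e \in Es ->
  [/\ is_maxchain (hle (@reesle d P t n)) (hin rb) htop (FF c e),
      map (pxd bot) (FF c e) = rcons c bot
    & pairmap (@dq d P n t) (hin rb) (behead (FF c e)) = rcons e None].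
Proof.
move=> /Cs_inv [c' [-> pc lc sc]] /Es_inv se.
have := Fr_sound bot ht semi hlen lamP (u := rb) pc lc (etrans se (esym sc)).
rewrite /= => [[e1 [p1 l1] m1 d1 _]].
rewrite /FF /=; split => //.
by rewrite e1 /= eqxx p1 /= l1.
Qed.

Lemma FF_complete s : is_maxchain (hle (@reesle d P t n)) (hin rb) htop s ->
  exists c e, [/\ c \in Cs, e \in Es & s = FF c e].
Proof.
case: s => [|a s] //= /and3P [/eqP -> ps /eqP ls].
have [c' [e [pc lc se ee]]] := Fr_complete hb ht semi hlen ps ls.
have mc : is_maxchain PL bot top (bot :: c') by rewrite /= eqxx pc /= lc eqxx.
have sc := maxchain_size hb ht semi hlen mc.
exists (bot :: c'), e; split => //.
- rewrite mem_filter mc mem_wrd sc eqxx andTb; apply/allP => x _; exact: mem_enum.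
- rewrite mem_wrd se; move: sc => /= [->]; rewrite eqxx /=.
  apply/allP => -[x|] _ //=; rewrite /Ao inE; apply/orP; right.
  by apply/mapP; exists x; rewrite ?mem_enum.
Qed.

Lemma count_main : card_is
    (fun s : seq (hat (Rees P t n)) =>
       is_maxchain (hle (@reesle d P t n)) (hin (rees_bot t n bot)) htop s && AF s)
    (\sum_(c <- Cs) Fm t (labels lab c)).
Proof.
exists [seq s <- [seq FF c e | c <- Cs, e <- Es] | AF s]; split.
- apply: filter_uniq; apply: allpairs_uniq.
  + by apply: filter_uniq; apply: wrd_uniq; apply: enum_uniq.
  + apply: wrd_uniq; rewrite /Ao cons_uniq map_inj_uniq ?enum_uniq ?andbT; last by move=> ?? [].
    by apply/mapP => -[].
  + move=> [c1 e1] [c2 e2] /allpairsP [[c1' e1'] [h1 h2 [-> ->]]] /allpairsP [[c2' e2'] [h3 h4 [-> ->]]] /= eq.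
    have [_ m1 d1] := FF_sound h1 h2; have [_ m2 d2] := FF_sound h3 h4.
    have := m1; rewrite eq m2 => /rcons_inj [->].
    by have := d1; rewrite eq d2 => /rcons_inj [->].
- move=> s; rewrite mem_filter andbC; congr andb.
  apply/allpairsP/idP => [[[c e] /= [cC eE ->]]|ms].
    by have [] := FF_sound cC eE.
  by have [c [e [cC eE ->]]] := FF_complete ms; exists (c, e).
- by rewrite size_filter count_allpairs'; apply: eq_big_seq => c cC; rewrite count_c.
Qed.

End Main.



Lemma card_tuple_count (X : finType) k (p : pred (seq X)) :
  #|[set s : k.-tuple X | p s]| = count p (wrd (enum X) k).
Proof.
rewrite -sum1dep_card sum1_count -(count_map val p).
apply/permP; apply: uniq_perm.
- by rewrite map_inj_uniq ?index_enum_uniq //; apply: val_inj.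
- by apply: wrd_uniq; apply: enum_uniq.
- move=> x; rewrite mem_wrd; apply/mapP/andP => [[s _ ->]|[/eqP sx _]].
    by split; [rewrite size_tuple | apply/allP => y _; apply: mem_enum].
  by exists (Tuple (introT eqP sx)); rewrite ?mem_index_enum.
Qed.

Lemma words_wrd (d' : Order.disp_t) (L : porderType d') (A : seq L) N :
  words A N = wrd A N.
Proof. by elim: N => //= N ->. Qed.

Lemma count_sum (X : Type) (a : pred X) s : count a s = (\sum_(x <- s) a x)%N.
Proof. by elim: s => [|x s IH]; rewrite ?big_nil ?big_cons //= IH. Qed.

Lemma pairmap_in (d : Order.disp_t) (P : finPOrderType d) (d' : Order.disp_t) (L : porderType d')
  (lamP : hat P -> hat P -> L) x s :
  all (mem (undup (labels_of_P lamP))) (pairmap (fun a b => lamP (hin a) (hin b)) x s).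
Proof.
elim: s x => [|y s IH] x //=; rewrite IH andbT /= mem_undup.
by apply: allpairs_f; rewrite mem_enum.
Qed.

Theorem theorem3p5
  (d : Order.disp_t) (P : finPOrderType d) (n t : nat) (bot top : P)
  (d' : Order.disp_t) (L : porderType d') (lamP : hat P -> hat P -> L) :
  (forall x : P, (bot <= x)%O) ->
  (forall x : P, (x <= top)%O) ->
  semipure P ->
  poset_length P = n ->
  (1 <= n)%N ->
  (1 <= t)%N ->
  EL_labeling (hle (@poset_le d P)) (fun a b : L => (a <= b)%O) lamP ->
  card_is
    (fun s : seq (hat (Rees P t n)) =>
       is_maxchain (hle (@reesle d P t n)) (hin (rees_bot t n bot)) htop s
       && ascent_free (@prodle d' L) (labels (induced_label lamP) s))
    (\sum_(w <- words (undup (labels_of_P lamP)) n |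
              NDA n w && last_not_ascent w)
        cP bot top lamP w * t ^ (asc w).+1 * (1 + t) ^ (n - 1 - 2 * asc w))%N.
Proof.
move=> hb ht semi hlen n1 _ EL.
set W := words _ n.
have -> : (\sum_(w <- W | NDA n w && last_not_ascent w)
        cP bot top lamP w * t ^ (asc w).+1 * (1 + t) ^ (n - 1 - 2 * asc w))%N =
        (\sum_(c <- Cs n bot top) Fm t (labels (lab lamP) c))%N.
  rewrite big_mkcond.
  transitivity (\sum_(w <- W) \sum_(c <- Cs n bot top)
                   ((labels (lab lamP) c == w) * Fm t w))%N.
    apply: eq_big_seq => w; rewrite /W words_wrd mem_wrd => /andP [/eqP sw _].
    rewrite -big_distrl /= -count_sum.
    rewrite /cP (card_tuple_count _ (fun s : seq P => is_maxchain (poset_le (P:=P)) bot top s && (labels (fun a b : P => lamP (hin a) (hin b)) s == w))) sw /Cs count_filter.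
    rewrite /Fm /NDA sw eqxx /=.
    have -> : count (fun s => is_maxchain (poset_le (P:=P)) bot top s &&
                   (labels (fun a b => lamP (hin a) (hin b)) s == w)) (wrd (enum P) n.+1) =
              count (predI (fun c => labels (lab lamP) c == w) (is_maxchain (poset_le (P:=P)) bot top))
                (wrd (enum P) n.+1).
      by apply: eq_count => c; rewrite /= andbC.
    by case: ifP => _; rewrite ?muln0 // mulnA.
  rewrite exchange_big /=; apply: eq_big_seq => c cC.
  have lW : labels (lab lamP) c \in W.
    rewrite /W words_wrd mem_wrd.
    have [c' [-> _ _ sc]] := Cs_inv cC.
    by rewrite /= size_pairmap sc eqxx /=; apply: pairmap_in.
  rewrite (bigD1_seq (labels (lab lamP) c)) //=; last by rewrite /W words_wrd wrd_uniq // undup_uniq.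
  rewrite eqxx mul1n big1 ?addn0 // => w /negbTE; rewrite eq_sym => ->.
  by rewrite mul0n.
exact: (count_main t hb ht semi hlen EL n1).
Qed.
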